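(* Let $(X,\mathcal{A})$ be a $(v,k,\lambda)$-BIBD. Then there exists a harmonious colouring of the Levi graph $\mathcal{L}(X,\mathcal{A})$ using $w$ colours if and only if there is a strong nesting $\phi:\mathcal{A}\to Y$ of $(X,\mathcal{A})$ with $X\subseteq Y$ and $|Y|=w$.
   Context: A $(v,k,\lambda)$-BIBD is a pair $(X,\mathcal{A})$ where $X$ is a set of $v$ points and $\mathcal{A}$ is a multiset of $k$-subsets of $X$ (blocks) such that every pair of distinct points lies in exactly $\lambda$ blocks. Given such $(X,\mathcal{A})$ and a set $Y\supseteq X$ with $|Y|=w$, a map $\phi:\mathcal{A}\to Y$ is a strong nesting if (1) $\phi(A)\notin A$ for every block $A\in\mathcal{A}$, and (2) the multiset of pairs $\{\{x,\phi(A)\}: A\in\mathcal{A},\ x\in A\}$ consists of distinct pairs. The Levi graph $\mathcal{L}(X,\mathcal{A})$ is the bipartite graph with vertex set $X\cup\mathcal{A}$ (each block of the multiset a separate vertex) and an edge $\{x,A\}$ whenever $x\in A$. A harmonious colouring of a graph is a map $c$ from its vertices to a set of colours such that adjacent vertices receive different colours and no two distinct edges $\{u,u'\}$, $\{z,z'\}$ satisfy $\{c(u),c(u')\}=\{c(z),c(z')\}$. *)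

(* Defs.v *)
From mathcomp Require Import all_boot.
Set Implicit Arguments. Unset Strict Implicit. Unset Printing Implicit Defensive.

(* A block design on point type X with blocks indexed by B (a multiset of
   blocks: distinct indices may carry equal blocks). *)
Definition is_bibd (X B : finType) (blk : B -> {set X}) (v k lam : nat) : Prop :=
  [/\ #|X| = v,
      (forall b, #|blk b| = k) &
      (forall x y : X, x != y ->
         #|[set b | (x \in blk b) && (y \in blk b)]| = lam)].

Definition levi_adj (X B : finType) (blk : B -> {set X}) : rel (X + B) :=
  fun u w => match u, w with
             | inl x, inr b => x \in blk b
             | inr b, inl x => x \in blk b
             | _, _ => false
             end.

Definition harmonious (V C : finType) (adj : rel V) (c : V -> C) : Prop :=
  (forall u u', adj u u' -> c u != c u') /\
  (forall u u' z z', adj u u' -> adj z z' ->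
     [set u; u'] != [set z; z'] ->
     [set c u; c u'] != [set c z; c z']).

(* Strong nesting phi : B -> Y, where X is embedded in Y by the injection emb. *)
Definition strong_nesting (X B Y : finType) (blk : B -> {set X})
    (emb : X -> Y) (phi : B -> Y) : Prop :=
  (forall b, phi b \notin emb @: blk b) /\
  (forall b b' x x', x \in blk b -> x' \in blk b' ->
     [set emb x; phi b] = [set emb x'; phi b'] -> b = b' /\ x = x').

(* Main.v *)
Require Import Defs.
From mathcomp Require Import all_boot.

Lemma pair_inj (T U : finType) (f : T -> U) (a b a' b' : T) :
  injective f -> [set f a; f b] = [set f a'; f b'] -> [set a; b] = [set a'; b'].
Proof.
move=> fi H; apply/setP => y.
have := congr1 (fun S : {set U} => f y \in S) H; rewrite !inE !(inj_eq fi) => ->. by [].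
Qed.

Lemma adj_norm (X B : finType) (blk : B -> {set X}) (u u' : X + B) :
  levi_adj blk u u' -> exists x b, [/\ x \in blk b, [set u; u'] = [set inl x; inr b] &
     forall (C : finType) (c : X + B -> C), [set c u; c u'] = [set c (inl x); c (inr b)]].
Proof.
rewrite /levi_adj; case: u => [x|b]; case: u' => [x'|b'] //= H.
- by exists x, b'; split.
- by exists x', b; split => // [|C c]; rewrite setUC.
Qed.

Theorem theorem5p1 (X B : finType) (blk : B -> {set X}) (v k lam w : nat) :
  is_bibd blk v k lam -> 0 < lam ->
  (exists c : X + B -> 'I_w, harmonious (levi_adj blk) c) <->
  (exists (Y : finType) (emb : X -> Y) (phi : B -> Y),
      [/\ injective emb, #|Y| = w & strong_nesting blk emb phi]).
Proof.
case=> _ _ Hl lam0; split.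
- case=> c [Hp Hh]; exists 'I_w, (fun x => c (inl x)), (fun b => c (inr b)); split.
  + move=> x y cxy; apply/eqP/negPn/negP => nxy.
    have := Hl x y nxy; set S := [set _ | _] => cS.
    have : 0 < #|S| by rewrite cS.
    case/card_gt0P => b; rewrite inE => /andP [xb yb].
    have E : [set inl x; inr b] != [set inl y; inr b] :> {set X + B}.
      apply/eqP => /setP /(_ (inl x)); rewrite !inE eqxx /=.
      by case/esym/orP => /eqP // -[xy]; rewrite xy eqxx in nxy.
    by have := Hh (inl x) (inr b) (inl y) (inr b) xb yb E; rewrite cxy eqxx.
  + by rewrite card_ord.
  + split.
    * move=> b; apply/imsetP => -[x xb E].
      by have := Hp (inl x) (inr b) xb; rewrite E eqxx.
    * move=> b b' x x' xb xb' E.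
      have Es : [set inl x; inr b] = [set inl x'; inr b'] :> {set X + B}.
        apply/eqP/negPn/negP => ne.
        by have := Hh (inl x) (inr b) (inl x') (inr b') xb xb' ne; rewrite E eqxx.
      have : inl x \in [set inl x'; inr b'] by rewrite -Es !inE eqxx.
      have : inr b \in [set inl x'; inr b'] by rewrite -Es !inE eqxx.
      by rewrite !inE => /orP[/eqP//|/eqP[->]] /orP[/eqP[->]|/eqP//].
- case=> Y [emb [phi [ei cY [Sn1 Sn2]]]].
  pose f (y : Y) : 'I_w := cast_ord cY (enum_rank y).
  have fi : injective f by move=> y1 y2 /cast_ord_inj /enum_rank_inj.
  pose col := fun u : X + B => match u with inl x => f (emb x) | inr b => f (phi b) end.
  exists col; split.
  + move=> u u'; case: u => [x|b]; case: u' => [x'|b'] //= H; rewrite (inj_eq fi).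
    * by apply: contraNneq (Sn1 b') => <-; apply: imset_f.
    * by apply: contraNneq (Sn1 b) => ->; apply: imset_f.
  + move=> u u' z z' /adj_norm [x [b [xb -> H1]]] /adj_norm [x' [b' [xb' -> H2]]].
    rewrite (H1 _ col) (H2 _ col).
    apply: contraNneq => /= /(@pair_inj _ _ _ _ _ _ _ fi) E.
    by case: (Sn2 _ _ _ _ xb xb' E) => -> ->.
Qed.
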